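(* Let $\vec{G}$ be a DDMOG of order $n$ with DDM labeling $g$, its vertices indexed $v_1,\dots,v_n$ so that $g(v_i)=i$. Then for every integer $\ell$ with $1\le\ell\le n/2$ there exists a labeling $h$ of $\ell\vec{C_4}$ (taken vertex-disjoint from $\vec{G}$) for which the weighted sum $\vec{G}\oplus_{wt_h}^0\ell\vec{C_4}$ is defined and is a DDMOG.
   Context: An oriented graph is a finite digraph without loops such that whenever $(u,v)$ is an arc, $(v,u)$ is not. For a vertex $v$, $N^+(v)=\{x:(x,v)\text{ is an arc}\}$, $N^-(v)=\{x:(v,x)\text{ is an arc}\}$; for a labeling $f$, $wt_f(v)=\sum_{x\in N^+(v)}f(x)-\sum_{x\in N^-(v)}f(x)$. A DDM labeling of an oriented graph on $n$ vertices is a bijection $f:V\to\{1,\dots,n\}$ with $wt_f(v)=0$ for all $v$; a DDMOG is an oriented graph admitting one. $\ell\vec{C_4}$ denotes the oriented graph consisting of $\ell$ vertex-disjoint directed 4-cycles, the $i$-th having vertices $v_{i1},v_{i2},v_{i3},v_{i4}$ and arcs $(v_{i1},v_{i2}),(v_{i2},v_{i3}),(v_{i3},v_{i4}),(v_{i4},v_{i1})$. For an oriented graph $\vec{H}$ with labeling $h$ and integer $j$, $V_h^{j}(\vec{H})=\{u:wt_h(u)=j\}$. Weighted sum: let $\vec{G}$ have vertices $v_1,\dots,v_n$ (indexed by a labeling $g$ with $g(v_i)=i$), $s\in\mathbb{Z}$, and $\vec{H}$ (vertex-disjoint from $\vec{G}$) have a labeling $h:V(\vec{H})\to\mathbb{Z}^+$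 with $\{|wt_h(u)|:u\in V(\vec{H})\}\subseteq\{0\}\cup\{i+s:1\le i\le n\}$; then $\vec{G}\oplus_{wt_h}^s\vec{H}$ has vertex set $V(\vec{G})\cup V(\vec{H})$ and arc set $E(\vec{G})\cup E(\vec{H})\cup\bigcup_{i=1}^n(E^i\cup E^{-i})$, where $E^i=\{(v_i,u):u\in V_h^{-i-s}(\vec{H})\}$ and $E^{-i}=\{(u,v_i):u\in V_h^{i+s}(\vec{H})\}$. *)

(* Defs.v *)
From mathcomp Require Import all_boot all_order all_algebra.
Set Implicit Arguments. Unset Strict Implicit. Unset Printing Implicit Defensive.
Import Order.TTheory GRing.Theory Num.Theory.
Local Open Scope ring_scope.

(* An oriented graph on a finite vertex type: arc relation E, no loops, no 2-cycles.
   (E u v -> ~~ E v u also excludes loops.) *)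
Definition oriented (V : finType) (E : rel V) : Prop :=
  forall u v, E u v -> ~~ E v u.

Definition wt (V : finType) (E : rel V) (f : V -> nat) (v : V) : int :=
  \sum_(x : V | E x v) (f x)%:Z - \sum_(x : V | E v x) (f x)%:Z.

Definition DDM_labeling (V : finType) (E : rel V) (f : V -> nat) : Prop :=
  [/\ forall v, (1 <= f v <= #|V|)%N, injective f & forall v, wt E f v = 0].

Definition DDMOG (V : finType) (E : rel V) : Prop :=
  oriented E /\ exists f : V -> nat, DDM_labeling E f.

(* l vertex-disjoint directed 4-cycles: vertex (i,j) is v_{i,j+1},
   arcs (i,j) -> (i, j+1 mod 4). *)
Definition lC4 (l : nat) : rel ('I_l * 'I_4) :=
  fun a b => (a.1 == b.1) && (val b.2 == (val a.2).+1 %% 4)%N.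

Definition wsum_defined (W : finType) (n : nat) (s : int) (F : rel W)
    (h : W -> nat) : Prop :=
  forall u, `|wt F h u| = 0 \/ exists i : nat, (1 <= i <= n)%N /\ `|wt F h u| = i%:Z + s.

(* The weighted sum G (+)^s_{wt_h} H on V(G) + V(H); the vertex v of G is v_i
   with i = g v.  E^i = {(v_i,u) : wt_h(u) = -i-s}, E^{-i} = {(u,v_i) : wt_h(u) = i+s}. *)
Definition wsum (V W : finType) (E : rel V) (g : V -> nat) (s : int)
    (F : rel W) (h : W -> nat) : rel (V + W) :=
  fun x y =>
    match x, y with
    | inl a, inl b => E a b
    | inr a, inr b => F a b
    | inl v, inr u => wt F h u == - ((g v)%:Z + s)
    | inr u, inl v => wt F h u == (g v)%:Z + s
    end.

(* Main.v *)
Require Import Defs.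
From mathcomp Require Import all_boot all_order all_algebra.
From mathcomp Require Import zify.
Import Order.TTheory GRing.Theory Num.Theory.
Local Open Scope ring_scope.

Definition pv (k : nat) : nat := match k with 0 => 3 | 1 => 0 | 2 => 1 | _ => 2 end%N.
Definition nv (k : nat) : nat := match k with 0 => 1 | 1 => 2 | 2 => 3 | _ => 0 end%N.
Lemma pv_lt k : (pv k < 4)%N. Proof. by case: k => [|[|[|]]]. Qed.
Lemma nv_lt k : (nv k < 4)%N. Proof. by case: k => [|[|[|]]]. Qed.
Definition prv (j : 'I_4) : 'I_4 := Ordinal (pv_lt j).
Definition nxt (j : 'I_4) : 'I_4 := Ordinal (nv_lt j).

Lemma lC4_in l x i j : @lC4 l x (i, j) = (x == (i, prv j)).
Proof.
case: x => i' j'; rewrite /lC4 /= xpair_eqE eq_sym; case: (i == i') => //=.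
rewrite -val_eqE /=.
by case: j j' => [[|[|[|[|?]]]] ?] [[|[|[|[|?]]]] ?].
Qed.

Lemma lC4_out l x i j : @lC4 l (i, j) x = (x == (i, nxt j)).
Proof.
case: x => i' j'; rewrite /lC4 /= xpair_eqE [i' == i]eq_sym; case: (i == i') => //=.
rewrite -val_eqE /=.
by case: j j' => [[|[|[|[|?]]]] ?] [[|[|[|[|?]]]] ?].
Qed.

Definition mm (j : 'I_4) : nat := match val j with 0 => 1 | 1 => 2 | 2 => 0 | _ => 3 end%N.
Definition hC (n l : nat) (u : 'I_l * 'I_4) : nat := (n + 1 + u.1 + mm u.2 * l)%N.

Lemma wtC n l i j : wt (@lC4 l) (hC n l) (i, j) = if (val j < 2)%N then l%:Z else - l%:Z.
Proof.
rewrite /wt (big_pred1 (i, prv j)); last by move=> x; rewrite lC4_in.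
rewrite (big_pred1 (i, nxt j)); last by move=> x; rewrite lC4_out.
rewrite /hC /=.
case: j => [[|[|[|[|?]]]] ?] //=; rewrite /mm /=; lia.
Qed.

Lemma g_onto (V : finType) (g : V -> nat) :
  (forall v, (1 <= g v <= #|V|)%N) -> injective g ->
  forall k, (1 <= k <= #|V|)%N -> exists v, g v = k.
Proof.
move=> gr gi k hk.
have gr' v : ((g v).-1 < #|V|)%N by move: (gr v); lia.
have hk' : (k.-1 < #|V|)%N by lia.
pose F v : 'I_#|V| := Ordinal (gr' v).
have Fi : injective F.
  move=> a b /(congr1 val) /= e; apply: gi; move: (gr a) (gr b); lia.
have := inj_card_onto Fi (eq_leq (card_ord _)) (Ordinal hk').
case/codomP => v /(congr1 val) /= e; exists v; move: (gr v); lia.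
Qed.

Lemma gsum (V : finType) (g : V -> nat) (z : int) :
  (forall v, (1 <= g v <= #|V|)%N) -> injective g ->
  \sum_(b | (g b)%:Z == z) (g b)%:Z = if (0 < z) && (z <= #|V|%:Z) then z else 0.
Proof.
move=> gr gi; case: ifP => hz.
  have [k ez] : exists k : nat, z = k%:Z by exists `|z|%N; lia.
  rewrite ez in hz *.
  have [v0 e0] := g_onto _ _ gr gi k ltac:(lia).
  rewrite (big_pred1 v0) ?e0 // => b /=.
  apply/eqP/eqP => [e|->]; [apply: gi; lia | by rewrite e0].
rewrite big_pred0 // => b; apply/eqP => e; move: (gr b) hz; lia.
Qed.

Lemma bal n l : (0 < l)%N ->
  \sum_(u | wt (@lC4 l) (hC n l) u == l%:Z) (hC n l u)%:Z =
  \sum_(u | wt (@lC4 l) (hC n l) u == - l%:Z) (hC n l u)%:Z.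
Proof.
move=> l0; apply/eqP; rewrite -subr_eq0 [X in X - _]big_mkcond [X in _ - X]big_mkcond.
rewrite -sumrB /=.
rewrite -(pair_bigA _ (fun i j => (if wt (@lC4 l) (hC n l) (i, j) == l%:Z then (hC n l (i,j))%:Z else 0)
   - (if wt (@lC4 l) (hC n l) (i,j) == - l%:Z then (hC n l (i,j))%:Z else 0))) /=.
apply/eqP; apply: big1 => i _.
rewrite !big_ord_recl big_ord0 !wtC /=.
have h1 : (l%:Z == - l%:Z) = false by apply/eqP; lia.
have h2 : (- l%:Z == l%:Z) = false by apply/eqP; lia.
rewrite !eqxx h1 h2 /hC /= /mm /=; lia.
Qed.

Theorem corollary2 (V : finType) (E : rel V) (g : V -> nat) :
  oriented E -> DDM_labeling E g ->
  forall l : nat, (1 <= l)%N -> (l.*2 <= #|V|)%N ->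
  exists h : 'I_l * 'I_4 -> nat,
    (forall u, (0 < h u)%N) /\
    wsum_defined #|V| 0 (@lC4 l) h /\
    DDMOG (wsum E g 0 (@lC4 l) h).
Proof.
move=> oE [gr gi g0] l l1 l2.
have ln : (l <= #|V|)%N by lia.
exists (hC #|V| l); split; first by move=> u; rewrite /hC; lia.
split.
  move=> [i j]; rewrite wtC; right; exists l; split; first lia.
  by case: ifP => _; lia.
split.
  move=> [a|[i j]] [b|[i' j']] //=.
  - exact: oE.
  - move/eqP ->; move: (gr a); set N := #|V|; lia.
  - move/eqP ->; move: (gr b); set N := #|V|; lia.
  - rewrite lC4_out => /eqP [<- ->]; rewrite lC4_out xpair_eqE negb_and; apply/orP; right.
    rewrite -val_eqE /=; by case: j => [[|[|[|[|?]]]] ?].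
pose f x := match x with inl v => g v | inr u => hC #|V| l u end.
exists f; split.
- have cs : #|{: V + 'I_l * 'I_4}| = (#|V| + l * 4)%N.
    by rewrite card_sum card_prod !card_ord.
  move=> [v|[i j]]; rewrite cs [f _]/=.
    move: (gr v); lia.
  rewrite /hC [(_, _).1]/= [(_, _).2]/=.
  have : (mm j * l <= 3 * l)%N by rewrite leq_mul2r; case: j => [[|[|[|[|?]]]] ?]; rewrite ?orbT.
  move: (ltn_ord i); set N := #|V|; lia.
- move=> [a|[i j]] [b|[i' j']] //=.
  + by move/gi ->.
  + rewrite /hC /=; move: (gr a); set N := #|V|; lia.
  + rewrite /hC /=; move: (gr b); set N := #|V|; lia.
  + rewrite /hC /= => e.
    have [H1 H2] : mm j = mm j' /\ (i : nat) = i'.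
      move: (ltn_ord i) (ltn_ord i') e.
      by case: j j' => [[|[|[|[|?]]]] ?] [[|[|[|[|?]]]] ?]; rewrite /mm /=; lia.
    congr (inr (_, _)); first exact: val_inj.
    apply: val_inj; move: H1; clear e.
    by case: j j' => [[|[|[|[|?]]]] ?] [[|[|[|[|?]]]] ?].
- move=> [v|[i j]]; rewrite /wt !big_sumType /=.
    rewrite opprD addrACA.
    have e := g0 v; rewrite /wt in e; rewrite e add0r !addr0.
    have gv := gr v.
    have [gl|gl] := eqVneq (g v) l.
      1: by rewrite gl bal // subrr.
    set N := #|V| in gv *; move/eqP: gl => gl.
    rewrite big_pred0; last by move=> [i j]; rewrite wtC; case: ifP => _; apply/eqP; lia.
    rewrite big_pred0; last by move=> [i j]; rewrite wtC; case: ifP => _; apply/eqP; lia.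
    by rewrite subrr.
  rewrite opprD addrACA.
  have -> : \sum_(i0 | lC4 i0 (i, j)) (hC #|V| l i0)%:Z - \sum_(i0 | lC4 (i, j) i0) (hC #|V| l i0)%:Z
     = wt (@lC4 l) (hC #|V| l) (i, j) by [].
  rewrite wtC; set N := #|V| in ln *; case: ifP => hj.
    1: rewrite (eq_bigl (fun b => (g b)%:Z == - l%:Z)); last by move=> b; apply/eqP/eqP; lia.
    1: rewrite gsum //.
    1: rewrite (eq_bigl (fun b => (g b)%:Z == l%:Z)); last by move=> b; apply/eqP/eqP; lia.
    1: rewrite gsum //; case: ifP; case: ifP; lia.
  rewrite (eq_bigl (fun b => (g b)%:Z == l%:Z)); last by move=> b; apply/eqP/eqP; lia.
  rewrite gsum //.
  rewrite (eq_bigl (fun b => (g b)%:Z == - l%:Z)); last by move=> b; apply/eqP/eqP; lia.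
  rewrite gsum //; case: ifP; case: ifP; lia.
Qed.
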